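(* Let $A$ be a complex semisimple Banach algebra with a unit, and suppose that $\mathrm{Soc}(A)\neq\{0\}$. Then $\mathrm{Soc}(A)$, regarded as a normed algebra with the norm of $A$, has a two-sided approximate identity. *)

(* Defs.v *)
From Stdlib Require Import Reals List.
Open Scope R_scope.

Record C := mkC { Cre : R; Cim : R }.
Definition C0 : C := mkC 0 0.
Definition C1 : C := mkC 1 0.
Definition Cadd (a b : C) : C := mkC (Cre a + Cre b) (Cim a + Cim b).
Definition Cmul (a b : C) : C :=
  mkC (Cre a * Cre b - Cim a * Cim b) (Cre a * Cim b + Cim a * Cre b).
Definition Cabs (a : C) : R := sqrt (Cre a ^ 2 + Cim a ^ 2).

Record BanachAlgebra := {
  car :> Type;
  ba0 : car;
  ba1 : car;
  baadd : car -> car -> car;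
  baopp : car -> car;
  bamul : car -> car -> car;
  bascal : C -> car -> car;
  banorm : car -> R;
  ba_addA : forall x y z, baadd x (baadd y z) = baadd (baadd x y) z;
  ba_addC : forall x y, baadd x y = baadd y x;
  ba_add0 : forall x, baadd ba0 x = x;
  ba_addN : forall x, baadd (baopp x) x = ba0;
  ba_scalDl : forall a b x, bascal (Cadd a b) x = baadd (bascal a x) (bascal b x);
  ba_scalDr : forall a x y, bascal a (baadd x y) = baadd (bascal a x) (bascal a y);
  ba_scalA : forall a b x, bascal (Cmul a b) x = bascal a (bascal b x);
  ba_scal1 : forall x, bascal C1 x = x;
  ba_mulA : forall x y z, bamul x (bamul y z) = bamul (bamul x y) z;
  ba_mulDl : forall x y z, bamul (baadd x y) z = baadd (bamul x z) (bamul y z);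
  ba_mulDr : forall x y z, bamul x (baadd y z) = baadd (bamul x y) (bamul x z);
  ba_scalMl : forall a x y, bascal a (bamul x y) = bamul (bascal a x) y;
  ba_scalMr : forall a x y, bascal a (bamul x y) = bamul x (bascal a y);
  ba_mul1l : forall x, bamul ba1 x = x;
  ba_mul1r : forall x, bamul x ba1 = x;
  ba_norm_eq0 : forall x, banorm x = 0 -> x = ba0;
  ba_normD : forall x y, banorm (baadd x y) <= banorm x + banorm y;
  ba_normZ : forall a x, banorm (bascal a x) = Cabs a * banorm x;
  ba_normM : forall x y, banorm (bamul x y) <= banorm x * banorm y;
  ba_complete : forall u : nat -> car,
    (forall eps, 0 < eps -> exists N, forall m n, (N <= m)%nat -> (N <= n)%nat ->
        banorm (baadd (u m) (baopp (u n))) < eps) ->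
    exists l, forall eps, 0 < eps -> exists N, forall n, (N <= n)%nat ->
        banorm (baadd (u n) (baopp l)) < eps
}.

Section Ideals.
Variable A : BanachAlgebra.

Definition left_ideal (L : A -> Prop) : Prop :=
  L (ba0 A) /\
  (forall x y, L x -> L y -> L (baadd A x y)) /\
  (forall a x, L x -> L (bascal A a x)) /\
  (forall a x, L x -> L (bamul A a x)).

Definition proper (L : A -> Prop) : Prop := ~ L (ba1 A).

Definition maximal_left_ideal (L : A -> Prop) : Prop :=
  left_ideal L /\ proper L /\
  forall J : A -> Prop, left_ideal J -> proper J ->
    (forall x, L x -> J x) -> forall x, J x -> L x.

Definition rad (x : A) : Prop :=
  forall L, maximal_left_ideal L -> L x.

Definition semisimple : Prop := forall x, rad x -> x = ba0 A.

Definition minimal_left_ideal (L : A -> Prop) : Prop :=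
  left_ideal L /\ (exists x, L x /\ x <> ba0 A) /\
  forall J : A -> Prop, left_ideal J -> (forall x, J x -> L x) ->
    (forall x, J x -> x = ba0 A) \/ (forall x, L x -> J x).

Definition soc (x : A) : Prop :=
  exists l : list A,
    Forall (fun y => exists L, minimal_left_ideal L /\ L y) l /\
    x = fold_right (baadd A) (ba0 A) l.

Definition has_two_sided_approx_identity_soc : Prop :=
  exists (I : Type) (le : I -> I -> Prop) (e : I -> A),
    inhabited I /\
    (forall i, le i i) /\
    (forall i j k, le i j -> le j k -> le i k) /\
    (forall i j, exists k, le i k /\ le j k) /\
    (forall i, soc (e i)) /\
    forall a, soc a ->
      forall eps, 0 < eps -> exists i0, forall i, le i0 i ->
        banorm A (baadd A (bamul A (e i) a) (baopp A a)) < eps /\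
        banorm A (baadd A (bamul A a (e i)) (baopp A a)) < eps.

End Ideals.

(* Main.v *)
Require Import Defs.
From Stdlib Require Import Reals List.
From Stdlib Require Import Classical ClassicalEpsilon.

Section S.
Variable A : BanachAlgebra.
Local Notation "x +' y" := (baadd A x y) (at level 50, left associativity).
Local Notation "x *' y" := (bamul A x y) (at level 40, left associativity).
Local Notation "-' x" := (baopp A x) (at level 35, right associativity).
Local Notation z0 := (ba0 A).
Local Notation u1 := (ba1 A).

Lemma addr0 x : x +' z0 = x.
Proof. rewrite ba_addC; apply ba_add0. Qed.
Lemma addrN x : x +' -' x = z0.
Proof. rewrite ba_addC; apply ba_addN. Qed.
Lemma addKl x y : -' x +' (x +' y) = y.
Proof. rewrite ba_addA, ba_addN, ba_add0; reflexivity. Qed.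
Lemma add_cancel x y z : x +' y = x +' z -> y = z.
Proof. intro H. rewrite <- (addKl x y), <- (addKl x z), H; reflexivity. Qed.
Lemma idem0 s : s +' s = s -> s = z0.
Proof. intro H. apply (add_cancel s). rewrite H, addr0; reflexivity. Qed.
Lemma mul0l x : z0 *' x = z0.
Proof. apply idem0. rewrite <- ba_mulDl, ba_add0; reflexivity. Qed.
Lemma mul0r x : x *' z0 = z0.
Proof. apply idem0. rewrite <- ba_mulDr, ba_add0; reflexivity. Qed.
Lemma opp_uniq u v : u +' v = z0 -> u = -' v.
Proof. intro H. rewrite <- (addr0 u), <- (addrN v), ba_addA, H, ba_add0; reflexivity. Qed.
Lemma mulNl a b : (-' a) *' b = -' (a *' b).
Proof. apply opp_uniq. rewrite <- ba_mulDl, ba_addN, mul0l; reflexivity. Qed.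
Lemma mulNr a b : a *' (-' b) = -' (a *' b).
Proof. apply opp_uniq. rewrite <- ba_mulDr, ba_addN, mul0r; reflexivity. Qed.
Lemma mulN1 x : (-' u1) *' x = -' x.
Proof. rewrite mulNl, ba_mul1l; reflexivity. Qed.
Lemma subr0_eq a b : a +' -' b = z0 -> a = b.
Proof. intro H. rewrite <- (addr0 a), <- (ba_addN A b), ba_addA, H, ba_add0; reflexivity. Qed.
Lemma addrNK' a b : a +' (b +' -' a) = b.
Proof. rewrite (ba_addC A b), ba_addA, addrN, ba_add0; reflexivity. Qed.
Lemma add4 a b c d : (a +' b) +' (c +' d) = (a +' c) +' (b +' d).
Proof.
  rewrite <- !ba_addA. f_equal. rewrite !ba_addA. f_equal. apply ba_addC.
Qed.

Lemma li_opp L x : left_ideal A L -> L x -> L (-' x).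
Proof. intros (H0&HD&HZ&HM) Hx. rewrite <- mulN1. apply HM, Hx. Qed.

Lemma semiprime (ss : semisimple A) z : z <> z0 -> exists b, z *' b *' z <> z0.
Proof.
  intro Hz. apply not_all_not_ex. intro Hall0.
  assert (Hall : forall b, z *' b *' z = z0) by (intro b; apply NNPP, Hall0).
  apply Hz, ss. intros M (HMl & HMp & HMmax).
  destruct (classic (M z)) as [Hm|Hm]; [exact Hm|exfalso].
  pose proof HMl as (M0&MD&MZ&MM).
  set (J := fun x => exists m c, M m /\ x = m +' c *' z).
  assert (HJ : left_ideal A J).
  { repeat split.
    - exists z0, z0. split; [exact M0|]. rewrite mul0l, addr0; reflexivity.
    - intros x y (m1&c1&H1&->) (m2&c2&H2&->). exists (m1 +' m2), (c1 +' c2).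
      split; [apply MD; assumption|]. rewrite ba_mulDl. apply add4.
    - intros a x (m&c&Hm'&->). exists (bascal A a m), (bascal A a c).
      split; [apply MZ; auto|]. rewrite ba_scalDr, ba_scalMl. reflexivity.
    - intros a x (m&c&Hm'&->). exists (a *' m), (a *' c).
      split; [apply MM; auto|]. rewrite ba_mulDr, ba_mulA. reflexivity. }
  destruct (classic (J u1)) as [HJ1|HJ1].
  - destruct HJ1 as (m&c&Hm1&He).
    assert (Hmeq : m = u1 +' -' (c *' z)).
    { rewrite He, <- ba_addA, addrN, addr0. reflexivity. }
    apply HMp. replace u1 with ((u1 +' c *' z) *' m) by
      (rewrite Hmeq, ba_mulDr, ba_mul1r, mulNr, ba_mulDl, ba_mul1l,
         <- (ba_mulA A c z (c *' z)), (ba_mulA A z c z), Hall, mul0r, addr0,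
         <- ba_addA, addrN, addr0; reflexivity).
    apply MM; exact Hm1.
  - apply Hm. apply (HMmax J HJ HJ1).
    + intros x Hx. exists x, z0. split; auto. rewrite mul0l, addr0; reflexivity.
    + exists z0, u1. split; auto. rewrite ba_mul1l, ba_add0; reflexivity.
Qed.

Definition rimg (L : A -> Prop) c := fun x => exists l, L l /\ x = l *' c.

Lemma rimg_li L c : left_ideal A L -> left_ideal A (rimg L c).
Proof.
  intros (H0&HD&HZ&HM). repeat split.
  - exists z0; split; [auto| rewrite mul0l; reflexivity].
  - intros x y (l1&H1&->) (l2&H2&->). exists (l1 +' l2). split; auto.
    rewrite ba_mulDl; reflexivity.
  - intros a x (l&Hl&->). exists (bascal A a l). split; auto. apply ba_scalMl.
  - intros a x (l&Hl&->). exists (a *' l). split; auto. apply ba_mulA.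
Qed.

Lemma rimg_min L c : minimal_left_ideal A L -> (exists l, L l /\ l *' c <> z0) ->
  minimal_left_ideal A (rimg L c).
Proof.
  intros (HL & _ & Hmin) (l&Hl&Hlc). split; [apply rimg_li; auto|]. split.
  - exists (l *' c). split; [exists l; auto| auto].
  - intros J HJ HJsub.
    pose proof HL as (H0&HD&HZ&HM).
    pose proof HJ as (J0&JD&JZ&JM).
    set (K := fun x => L x /\ J (x *' c)).
    assert (HK: left_ideal A K).
    { split; [split|split; [|split]].
      - auto.
      - rewrite mul0l; auto.
      - intros x y [Hx1 Hx2] [Hy1 Hy2]. split; [apply HD; auto|].
        rewrite ba_mulDl. apply JD; auto.
      - intros a x [Hx1 Hx2]. split; [apply HZ; auto|].
        rewrite <- ba_scalMl. apply JZ; auto.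
      - intros a x [Hx1 Hx2]. split; [apply HM; auto|].
        rewrite <- ba_mulA. apply JM; auto. }
    destruct (Hmin K HK (fun x Hx => proj1 Hx)) as [HK0|Hall].
    + left. intros x Hx. destruct (HJsub x Hx) as (l'&Hl'&Hx').
      subst x. rewrite (HK0 l'). apply mul0l. split; assumption.
    + right. intros x (l'&Hl'&->). exact (proj2 (Hall l' Hl')).
Qed.

Definition socP := fun y => exists L, minimal_left_ideal A L /\ L y.

Lemma soc0 : soc A z0.
Proof. exists nil. split; [constructor|reflexivity]. Qed.
Lemma soc_min L x : minimal_left_ideal A L -> L x -> soc A x.
Proof.
  intros HL Hx. exists (x :: nil). split.
  - constructor; [exists L; auto|constructor].
  - simpl. symmetry; apply addr0.
Qed.
Lemma fold_app l1 l2 : fold_right (baadd A) z0 (l1 ++ l2) =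
  fold_right (baadd A) z0 l1 +' fold_right (baadd A) z0 l2.
Proof.
  induction l1 as [|y l IH]; simpl.
  - symmetry; apply ba_add0.
  - rewrite IH, ba_addA; reflexivity.
Qed.
Lemma socD x y : soc A x -> soc A y -> soc A (x +' y).
Proof.
  intros (l1&H1&->) (l2&H2&->). exists (l1 ++ l2). split.
  - apply Forall_app; auto.
  - symmetry; apply fold_app.
Qed.
Lemma socM a x : soc A x -> soc A (a *' x).
Proof.
  intros (l&Hl&->). exists (map (bamul A a) l). split.
  - induction Hl as [|y l' [L [HL Hy]] Hl' IH]; simpl; constructor; auto.
    exists L. split; auto. destruct HL as ((_&_&_&HM)&_); apply HM; auto.
  - clear Hl. induction l as [|y l' IH]; simpl.
    + apply mul0r.
    + rewrite ba_mulDr. f_equal. apply IH.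
Qed.
Lemma socN x : soc A x -> soc A (-' x).
Proof. intro H. rewrite <- mulN1. apply socM, H. Qed.

Lemma soc_ind (Q : A -> Prop) : Q z0 ->
  (forall L y, minimal_left_ideal A L -> L y -> forall x, Q x -> Q (y +' x)) ->
  forall x, soc A x -> Q x.
Proof.
  intros H0 HS x (l&Hl&->).
  induction Hl as [|y l [L [HL Hy]] _ IH]; simpl; [auto| eapply HS; eauto].
Qed.

Lemma right_unit (ss : semisimple A) L : minimal_left_ideal A L ->
  exists e, L e /\ forall l, L l -> l *' e = l.
Proof.
  intros Hmin. pose proof Hmin as (HL & (z&Hz&Hz0) & Hm).
  destruct (semiprime ss z Hz0) as [b Hb].
  pose proof HL as (H0&HD&HZ&HM).
  assert (Hy : L (b *' z)) by (apply HM; auto).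
  destruct (Hm (rimg L (b *' z)) (rimg_li L _ HL)) as [Hz'|Hall].
  { intros x (l&Hl&->). rewrite ba_mulA; apply HM; auto. }
  - exfalso. apply Hb. apply Hz'. exists z. split; auto. rewrite ba_mulA; reflexivity.
  - destruct (Hall _ Hy) as (e&He&Hey).
    exists e. split; auto. intros l Hl.
    set (N := fun x => L x /\ x *' (b *' z) = z0).
    assert (HN : left_ideal A N).
    { split; [split|split; [|split]].
      - auto.
      - apply mul0l.
      - intros x y [Hx1 Hx2] [Hy1 Hy2]. split; [apply HD; auto|].
        rewrite ba_mulDl, Hx2, Hy2. apply addr0.
      - intros a x [Hx1 Hx2]. split; [apply HZ; auto|].
        rewrite <- ba_scalMl, Hx2. apply idem0. rewrite <- ba_scalDr, ba_add0; reflexivity.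
      - intros a x [Hx1 Hx2]. split; [apply HM; auto|].
        rewrite <- ba_mulA, Hx2. apply mul0r. }
    destruct (Hm N HN (fun x H => proj1 H)) as [HN0|HNall].
    + apply subr0_eq. apply HN0. split.
      * apply HD; [apply HM; auto | apply li_opp; auto].
      * rewrite ba_mulDl, mulNl, <- ba_mulA, <- Hey. apply addrN.
    + exfalso. apply Hb. rewrite <- ba_mulA. exact (proj2 (HNall z Hz)).
Qed.

Lemma left_unit (ss : semisimple A) L z : minimal_left_ideal A L -> L z ->
  exists e, soc A e /\ e *' z = z.
Proof.
  intros Hmin Hz. destruct (classic (z = z0)) as [->|Hz0].
  - exists z0. split; [apply soc0 | apply mul0l].
  - pose proof Hmin as (HL & _ & Hm). pose proof HL as (H0&HD&HZ&HM).
    destruct (semiprime ss z Hz0) as [b Hb].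
    destruct (Hm (rimg L (b *' z)) (rimg_li _ _ HL)) as [Hz'|Hall].
    + intros x (l&Hl&->). rewrite ba_mulA. apply HM; auto.
    + exfalso; apply Hb, Hz'. exists z; split; auto. rewrite ba_mulA; reflexivity.
    + destruct (Hall z Hz) as (t&Ht&Htz).
      exists (t *' b). split.
      * apply (soc_min (rimg L b)).
        -- apply rimg_min; auto. exists t; split; auto. intro Htb. apply Hz0.
           rewrite Htz, ba_mulA, Htb, mul0l; reflexivity.
        -- exists t; split; auto.
      * rewrite <- ba_mulA. symmetry; exact Htz.
Qed.

Lemma right_step (ss : semisimple A) L y f : minimal_left_ideal A L -> L y -> soc A f ->
  exists g, soc A g /\ y *' g = y /\ forall x, x *' f = x -> x *' g = x.
Proof.
  intros Hmin Hy Hf.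
  destruct (classic (y *' (u1 +' -' f) = z0)) as [Hyc|Hyc].
  - exists f. split; auto. split; [|auto].
    rewrite ba_mulDr, ba_mul1r, mulNr in Hyc. symmetry; apply subr0_eq; exact Hyc.
  - assert (Hm' : minimal_left_ideal A (rimg L (u1 +' -' f))).
    { apply rimg_min; eauto. }
    destruct (right_unit ss _ Hm') as (e&He&Hu).
    assert (Hse : soc A e) by (eapply soc_min; eauto).
    exists (f +' (e +' -' (f *' e))). split.
    + apply socD; auto. apply socD; auto. apply socN, socM; auto.
    + split.
      * assert (Hyce : y *' (u1 +' -' f) *' e = y *' (u1 +' -' f))
          by (apply Hu; exists y; split; auto).
        rewrite ba_mulDr, ba_mul1r, mulNr, ba_mulDl, mulNl in Hyce.
        rewrite ba_mulDr, ba_mulDr, mulNr, ba_mulA, Hyce. apply addrNK'.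
      * intros x Hx. rewrite ba_mulDr, ba_mulDr, mulNr, ba_mulA, Hx, addrN, addr0.
        reflexivity.
Qed.

Lemma left_step (ss : semisimple A) L y f : minimal_left_ideal A L -> L y -> soc A f ->
  exists g, soc A g /\ g *' y = y /\ forall x, f *' x = x -> g *' x = x.
Proof.
  intros Hmin Hy Hf. pose proof Hmin as (HL&_&_). pose proof HL as (H0&HD&HZ&HM).
  assert (Hz : L (y +' -' (f *' y))) by (apply HD; [auto| apply li_opp; auto]).
  destruct (left_unit ss L _ Hmin Hz) as (e&He&Hez).
  exists (f +' (e +' -' (e *' f))). split.
  - apply socD; auto. apply socD; auto. apply socN, socM; auto.
  - split.
    + rewrite !ba_mulDl, mulNl, <- ba_mulA, <- mulNr, <- ba_mulDr, Hez.
      apply addrNK'.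
    + intros x Hx. rewrite !ba_mulDl, mulNl, <- ba_mulA, Hx, addrN, addr0.
      reflexivity.
Qed.

Lemma left_soc (ss : semisimple A) a : soc A a -> forall f, soc A f ->
  exists g, soc A g /\ g *' a = a /\ forall x, f *' x = x -> g *' x = x.
Proof.
  apply (soc_ind (fun a => forall f, soc A f ->
    exists g, soc A g /\ g *' a = a /\ forall x, f *' x = x -> g *' x = x)).
  - intros f Hf. exists f. split; auto. split; auto. apply mul0r.
  - intros L y HL Hy x IH f Hf.
    destruct (IH f Hf) as (g'&Hg'&Hg'x&Hg'f).
    destruct (left_step ss L y g' HL Hy Hg') as (g&Hg&Hgy&Hgg').
    exists g. split; auto. split.
    + rewrite ba_mulDr, Hgy, (Hgg' x Hg'x). reflexivity.
    + auto.
Qed.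

Lemma right_soc (ss : semisimple A) a : soc A a -> forall f, soc A f ->
  exists g, soc A g /\ a *' g = a /\ forall x, x *' f = x -> x *' g = x.
Proof.
  apply (soc_ind (fun a => forall f, soc A f ->
    exists g, soc A g /\ a *' g = a /\ forall x, x *' f = x -> x *' g = x)).
  - intros f Hf. exists f. split; auto. split; auto. apply mul0l.
  - intros L y HL Hy x IH f Hf.
    destruct (IH f Hf) as (g'&Hg'&Hg'x&Hg'f).
    destruct (right_step ss L y g' HL Hy Hg') as (g&Hg&Hgy&Hgg').
    exists g. split; auto. split.
    + rewrite ba_mulDl, Hgy, (Hgg' x Hg'x). reflexivity.
    + auto.
Qed.

Lemma leftX (ss : semisimple A) (X : list A) :
  exists f, soc A f /\ forall a, In a X -> soc A a -> f *' a = a.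
Proof.
  induction X as [|a X (f&Hf&IH)].
  - exists z0. split; [apply soc0| intros a []].
  - destruct (classic (soc A a)) as [Ha|Ha].
    + destruct (left_soc ss a Ha f Hf) as (g&Hg&Hga&Hgf). exists g. split; auto.
      intros b [<-|Hb] Hsb; auto.
    + exists f. split; auto. intros b [<-|Hb] Hsb; [contradiction|auto].
Qed.

Lemma rightX (ss : semisimple A) (X : list A) :
  exists f, soc A f /\ forall a, In a X -> soc A a -> a *' f = a.
Proof.
  induction X as [|a X (f&Hf&IH)].
  - exists z0. split; [apply soc0| intros a []].
  - destruct (classic (soc A a)) as [Ha|Ha].
    + destruct (right_soc ss a Ha f Hf) as (g&Hg&Hga&Hgf). exists g. split; auto.
      intros b [<-|Hb] Hsb; auto.
    + exists f. split; auto. intros b [<-|Hb] Hsb; [contradiction|auto].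
Qed.

Lemma twoX (ss : semisimple A) X : exists f, soc A f /\
  forall a, In a X -> soc A a -> f *' a = a /\ a *' f = a.
Proof.
  destruct (leftX ss X) as (f2&H2&Hl). destruct (rightX ss X) as (f1&H1&Hr).
  exists (f1 +' (f2 +' -' (f1 *' f2))). split.
  - apply socD; auto. apply socD; auto. apply socN, socM; auto.
  - intros a Ha Hsa. split.
    + rewrite !ba_mulDl, mulNl, <- ba_mulA, (Hl a Ha Hsa). apply addrNK'.
    + rewrite !ba_mulDr, mulNr, ba_mulA, (Hr a Ha Hsa), addrN, addr0. reflexivity.
Qed.

Lemma scalC0 x : bascal A C0 x = z0.
Proof.
  apply idem0. rewrite <- ba_scalDl. f_equal. unfold Cadd, C0; simpl. f_equal; ring.
Qed.

Lemma norm0 : banorm A z0 = 0.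
Proof.
  rewrite <- (scalC0 z0), ba_normZ.
  replace (Cabs C0) with 0. ring.
  unfold Cabs, C0; simpl. replace (0 * (0 * 1) + 0 * (0 * 1)) with 0 by ring.
  rewrite sqrt_0; reflexivity.
Qed.

End S.

Theorem theorem1p7 (A : BanachAlgebra) :
  semisimple A ->
  (exists x, soc A x /\ x <> ba0 A) ->
  has_two_sided_approx_identity_soc A.
Proof.
  intros ss _.
  assert (H : forall X : list A, {f | soc A f /\ forall a, In a X -> soc A a ->
     bamul A f a = a /\ bamul A a f = a}).
  { intro X; apply constructive_indefinite_description, twoX, ss. }
  exists (list A), (fun i j => incl i j), (fun X => proj1_sig (H X)).
  split; [exact (inhabits nil)|].
  split; [intro i; apply incl_refl|].
  split; [intros i j k; apply incl_tran|].
  split.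
  { intros i j; exists (i ++ j); split; [apply incl_appl, incl_refl | apply incl_appr, incl_refl]. }
  split.
  { intro i. exact (proj1 (proj2_sig (H i))). }
  intros a Ha eps Heps. exists (a :: nil). intros i Hi.
  destruct (proj2 (proj2_sig (H i)) a (Hi a (or_introl eq_refl)) Ha) as [E1 E2].
  rewrite E1, E2, addrN, norm0. split; assumption.
Qed.
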